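(* Let $H$ be a real Hilbert space, $A:H\to c_0$ bounded linear with adjoint $A^*:\ell^1\to H$ (identifying $c_0^*=\ell^1$), let $H_n\subset H$ be a subspace of dimension $n$ with $\mathcal N(A)\cap H_n=\{0\}$. For $i=1,2$ let $f^i\in H$ and let $u^{n,i}$ be a solution of $$\min_{u\in\ell^1}\|u\|_1\quad\text{subject to}\quad \langle z,A^*u\rangle=\langle z,f^i\rangle\ \ \forall z\in H_n,$$ and let $v^{n,i}\in H_n$ be such that $Av^{n,i}\in\partial\|\cdot\|_1(u^{n,i})$ (such elements exist). Then $$D^{\mathrm{sym}}(u^{n,1},u^{n,2}):=\langle Av^{n,1}-Av^{n,2},\,u^{n,1}-u^{n,2}\rangle\le 2\kappa_n\|f^1-f^2\|$$ and $$\big|\|u^{n,1}\|_1-\|u^{n,2}\|_1\big|\le 2\kappa_n\|f^1-f^2\|.$$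
   Context: $A^*$ is defined by $\langle A^*u,z\rangle=\sum_iu_i(Az)_i$. $\partial\|\cdot\|_1(u)=\{\xi\in\ell^\infty:\|\xi\|_\infty\le1,\ \sum_i\xi_iu_i=\|u\|_1\}$. $\kappa_n=\sup_{z\in H_n\setminus\{0\}}\|z\|/\|Az\|_\infty$. The symmetric Bregman distance is $D^{\mathrm{sym}}(v,u)=\langle\xi_v-\xi_u,v-u\rangle$ for subgradients $\xi_v\in\partial\|\cdot\|_1(v)$, $\xi_u\in\partial\|\cdot\|_1(u)$. *)

(* Defs.v *)
From HB Require Import structures.
From mathcomp Require Import all_boot all_order all_algebra.
From mathcomp Require Import all_classical all_reals all_analysis.
Import numFieldNormedType.Exports.
Import Order.TTheory GRing.Theory Num.Theory.
Local Open Scope ring_scope.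
Local Open Scope classical_set_scope.

Section Defs.
Context {R : realType} {V : lmodType R}.

Definition inner_product (ip : V -> V -> R) : Prop :=
  (forall x y, ip x y = ip y x) /\
  (forall (a : R) x y z, ip (a *: x + y) z = a * ip x z + ip y z) /\
  (forall x, 0 <= ip x x) /\
  (forall x, ip x x = 0 -> x = 0).

Definition ipnorm (ip : V -> V -> R) (x : V) : R := Num.sqrt (ip x x).

Definition ip_complete (ip : V -> V -> R) : Prop :=
  forall u : nat -> V,
    (forall e : R, 0 < e -> exists N, forall m k, (N <= m)%N -> (N <= k)%N ->
       ipnorm ip (u m - u k) < e) ->
    exists l : V, forall e : R, 0 < e -> exists N, forall k, (N <= k)%N ->
       ipnorm ip (u k - l) < e.

Definition is_c0 (a : nat -> R) : Prop := a @ \oo --> 0%R.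

Definition supnorm (a : nat -> R) : R := sup [set `|a k| | k in [set: nat]].

Definition bounded_linear_c0 (ip : V -> V -> R) (A : V -> nat -> R) : Prop :=
  (forall x, is_c0 (A x)) /\
  (forall (a : R) x y k, A (a *: x + y) k = a * A x k + A y k) /\
  (exists C : R, forall x k, `|A x k| <= C * ipnorm ip x).

Definition in_l1 (u : nat -> R) : Prop := cvgn (series (fun k => `|u k|)).
Definition l1norm (u : nat -> R) : R := limn (series (fun k => `|u k|)).

Definition pair_seq (xi u : nat -> R) : R := limn (series (fun k => xi k * u k)).

Definition subdiff_l1 (u xi : nat -> R) : Prop :=
  (forall k, `|xi k| <= 1) /\ pair_seq xi u = l1norm u.

(* H_n = span of a family b : 'I_n -> V *)
Definition in_span {n : nat} (b : 'I_n -> V) (z : V) : Prop :=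
  exists c : 'I_n -> R, z = \sum_(i < n) c i *: b i.

Definition lin_indep {n : nat} (b : 'I_n -> V) : Prop :=
  forall c : 'I_n -> R, \sum_(i < n) c i *: b i = 0 -> forall i, c i = 0.

Definition kernel_trivial_on {n : nat} (A : V -> nat -> R) (b : 'I_n -> V) : Prop :=
  forall z, in_span b z -> (forall k, A z k = 0) -> z = 0.

Definition kappa {n : nat} (ip : V -> V -> R) (A : V -> nat -> R) (b : 'I_n -> V) : R :=
  sup [set ipnorm ip z / supnorm (A z) | z in [set z | in_span b z /\ z <> 0]].

(* constraint <z, A^* u> = <z, f> for all z in H_n, with A^* unfolded by its
   defining identity <A^* u, z> = sum_i u_i (A z)_i *)
Definition constraint {n : nat} (ip : V -> V -> R) (A : V -> nat -> R)
  (b : 'I_n -> V) (f : V) (u : nat -> R) : Prop :=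
  forall z, in_span b z -> pair_seq (A z) u = ip z f.

Definition is_min_sol {n : nat} (ip : V -> V -> R) (A : V -> nat -> R)
  (b : 'I_n -> V) (f : V) (u : nat -> R) : Prop :=
  in_l1 u /\ constraint ip A b f u /\
  forall w, in_l1 w -> constraint ip A b f w -> l1norm u <= l1norm w.

End Defs.

(* Main.v *)
Require Import Defs.
From HB Require Import structures.
From mathcomp Require Import all_boot all_order all_algebra.
From mathcomp Require Import all_classical all_reals all_analysis.
From mathcomp Require Import ring lra.
Import numFieldNormedType.Exports.
Import Order.TTheory GRing.Theory Num.Theory.
Local Open Scope ring_scope.
Local Open Scope classical_set_scope.

Section IP.
Context {R : realType} {V : lmodType R} (ip : V -> V -> R) (Hip : inner_product ip).

Lemma ipDZl a x y z : ip (a *: x + y) z = a * ip x z + ip y z.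
Proof. by case: Hip => _ [H _]; apply: H. Qed.
Lemma ipC x y : ip x y = ip y x.
Proof. by case: Hip => H _; apply: H. Qed.
Lemma ip_ge0 x : 0 <= ip x x.
Proof. by case: Hip => _ [_ [H _]]; apply: H. Qed.
Lemma ip_eq0 x : ip x x = 0 -> x = 0.
Proof. by case: Hip => _ [_ [_ H]]; apply: H. Qed.
Lemma ip0l z : ip 0 z = 0.
Proof. have := ipDZl 1 0 0 z; rewrite scale1r addr0 mul1r => h; lra. Qed.
Lemma ipDl x y z : ip (x + y) z = ip x z + ip y z.
Proof. by rewrite -[x]scale1r ipDZl mul1r scale1r. Qed.
Lemma ipZl a x z : ip (a *: x) z = a * ip x z.
Proof. by rewrite -[a *: x]addr0 ipDZl ip0l addr0. Qed.
Lemma ipBl x y z : ip (x - y) z = ip x z - ip y z.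
Proof. by rewrite -scaleN1r addrC ipDZl mulN1r addrC. Qed.
Lemma ipBr x y z : ip z (x - y) = ip z x - ip z y.
Proof. by rewrite ipC ipBl ipC [ip y z]ipC. Qed.
Lemma ip_suml (I : finType) (c : I -> R) (f : I -> V) z :
  ip (\sum_i c i *: f i) z = \sum_i c i * ip (f i) z.
Proof.
apply: (big_ind2 (fun x r => ip x z = r)); first exact: ip0l.
  by move=> x1 r1 x2 r2 <- <-; rewrite ipDl.
by move=> i _; rewrite ipZl.
Qed.

Lemma CS x y : ip x y <= ipnorm ip x * ipnorm ip y.
Proof.
rewrite /ipnorm -sqrtrM ?ip_ge0 //.
have [a0|apos] := eqVneq (ip x x) 0.
  by rewrite (ip_eq0 _ a0) ip0l sqrtr_ge0.
have ha : 0 < ip x x by rewrite lt_neqAle eq_sym apos ip_ge0.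
set a := ip x x in ha *; set bb := ip x y; set c := ip y y.
have key : bb ^+ 2 <= a * c.
  have := ip_ge0 ((- (bb / a)) *: x + y).
  rewrite ipDZl !(ipC _ (_ *: x + y)) !ipDZl.
  rewrite [ip y x]ipC -/a -/bb -/c.
  move=> h; have : 0 <= a * (- (bb / a) * (- (bb / a) * a + bb) + (- (bb / a) * bb + c)).
    by rewrite mulr_ge0 // ltW.
  have -> : a * (- (bb / a) * (- (bb / a) * a + bb) + (- (bb / a) * bb + c)) = a * c - bb ^+ 2.
    by field; rewrite gt_eqF.
  by rewrite subr_ge0.
have [b0|bpos] := leP bb 0; first by apply: le_trans b0 _; rewrite sqrtr_ge0.
rewrite -(ger0_norm (ltW bpos)) -sqrtr_sqr ler_sqrt //.
by apply: le_trans key; rewrite sqr_ge0.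
Qed.
End IP.

Section Alin.
Context {R : realType} {V : lmodType R} (A : V -> nat -> R)
  (HA : forall (a : R) x y k, A (a *: x + y) k = a * A x k + A y k).

Lemma A0 k : A 0 k = 0.
Proof. have := HA 1 0 0 k; rewrite scale1r addr0 mul1r => h; lra. Qed.
Lemma AD x y k : A (x + y) k = A x k + A y k.
Proof. by rewrite -[x]scale1r HA mul1r scale1r. Qed.
Lemma AZ a x k : A (a *: x) k = a * A x k.
Proof. by rewrite -[a *: x]addr0 HA A0 addr0. Qed.
Lemma AB x y k : A (x - y) k = A x k - A y k.
Proof. by rewrite -scaleN1r addrC HA mulN1r addrC. Qed.
Lemma A_sum (I : finType) (c : I -> R) (f : I -> V) k :
  A (\sum_i c i *: f i) k = \sum_i c i * A (f i) k.
Proof.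
apply: (big_ind2 (fun x r => A x k = r)); first exact: A0.
  by move=> x1 r1 x2 r2 <- <-; rewrite AD.
by move=> i _; rewrite AZ.
Qed.

Variables (n : nat) (b : 'I_n -> V).
Hypothesis Hli : lin_indep b.
Hypothesis Hker : kernel_trivial_on A b.

Definition Mx m : 'M[R]_(m, n) := \matrix_(k < m, i < n) A (b i) k.
Definition rk k : 'rV[R]_n := \row_(i < n) A (b i) k.

Lemma Mx_sub m m' : (m <= m')%N -> (Mx m <= Mx m')%MS.
Proof.
move=> le; apply/row_subP => i.
have -> : row i (Mx m) = row (widen_ord le i) (Mx m').
  by apply/rowP => j; rewrite !mxE.
exact: row_sub.
Qed.

Lemma rk_row k m (hk : (k < m)%N) : rk k = row (Ordinal hk) (Mx m).
Proof. by apply/rowP => j; rewrite !mxE. Qed.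

Lemma ex_left_inv : exists m (B : 'M[R]_(n, m)), B *m Mx m = 1%:M.
Proof.
pose P := fun r : nat => `[< exists m, \rank (Mx m) = r >].
have exP : exists i, P i by exists (\rank (Mx 0)); apply/asboolP; exists 0%N.
have ubP : forall i, P i -> (i <= n)%N.
  by move=> i /asboolP[m <-]; exact: rank_leq_col.
case: (ex_maxnP exP ubP) => r /asboolP[m0 Hm0] Hmax.
have rk_sub : forall k, (rk k <= Mx m0)%MS.
  move=> k; have hk : (k < maxn m0 k.+1)%N by rewrite leq_max leqnn orbT.
  rewrite (rk_row _ _ hk).
  have s1 : (Mx m0 <= Mx (maxn m0 k.+1))%MS by apply: Mx_sub; rewrite leq_max leqnn.
  have s2 : (Mx (maxn m0 k.+1) <= Mx m0)%MS.
    have := mxrank_leqif_sup s1 => /leqifP.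
    case: ifP => // _ /= hlt; exfalso.
    have : P (\rank (Mx (maxn m0 k.+1))) by apply/asboolP; exists (maxn m0 k.+1).
    by move=> /Hmax; rewrite leqNgt -Hm0 hlt.
  exact: submx_trans (row_sub _ _) s2.
have full : row_full (Mx m0).
  rewrite -sub1mx submxE mul1mx; apply/eqP/matrixP => i j; rewrite [RHS]mxE.
  case: (eqVneq (cokermx (Mx m0) i j) 0) => // /eqP nz; exfalso.
  pose z := \sum_(l < n) cokermx (Mx m0) l j *: b l.
  have Az : forall k, A z k = 0.
    move=> k; rewrite /z A_sum.
    have /submxP[D HD] := rk_sub k.
    have h0 : (rk k *m cokermx (Mx m0)) 0 j = 0.
      by rewrite HD -mulmxA mulmx_coker mulmx0 mxE.
    rewrite mxE in h0; apply: etrans h0; apply: eq_bigr => l _.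
    by rewrite [rk _ _ _]mxE mulrC.
  have z0 : z = 0.
    by apply: (Hker _ _ Az); exists (fun l => cokermx (Mx m0) l j).
  exact: nz (Hli _ z0 i).
by case/row_fullP: full => B HB; exists m0, B.
Qed.

Variables (ip : V -> V -> R) (Hip : inner_product ip).

Lemma span_bound : exists K, 0 <= K /\ forall (c : 'I_n -> R) s,
  (forall k, `|A (\sum_i c i *: b i) k| <= s) ->
  ipnorm ip (\sum_i c i *: b i) <= K * s.
Proof.
have [m [B HB]] := ex_left_inv.
pose L := \sum_i \sum_(k < m) `|B i k|.
pose G := \sum_i \sum_j `|ip (b j) (b i)|.
have L0 : 0 <= L by rewrite sumr_ge0 // => i _; rewrite sumr_ge0.
have G0 : 0 <= G by rewrite sumr_ge0 // => i _; rewrite sumr_ge0.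
exists (L * Num.sqrt G); split; first by rewrite mulr_ge0 ?sqrtr_ge0.
move=> c s Hs; set z := \sum_i c i *: b i.
have s0 : 0 <= s by apply: le_trans (Hs 0%N).
have ci : forall i, `|c i| <= L * s.
  move=> i; pose cv : 'cV[R]_n := \col_l c l.
  have e1 : forall k : 'I_m, (Mx m *m cv) k 0 = A z k.
    move=> k; rewrite mxE /z A_sum; apply: eq_bigr => l _.
    by rewrite !mxE mulrC.
  have e2 : c i = \sum_(k < m) B i k * A z k.
    have : cv i 0 = (B *m (Mx m *m cv)) i 0 by rewrite mulmxA HB mul1mx.
    rewrite [LHS]mxE => ->; rewrite mxE; apply: eq_bigr => k _; by rewrite e1.
  rewrite e2; apply: le_trans (ler_norm_sum _ _ _) _.
  apply: (@le_trans _ _ (\sum_(k < m) `|B i k| * s)).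
    by apply: ler_sum => k _; rewrite normrM ler_wpM2l.
  rewrite -mulr_suml ler_wpM2r // /L (bigD1 i) //= lerDl sumr_ge0 // => l _.
  by rewrite sumr_ge0.
have zz : ip z z = \sum_i \sum_j c i * c j * ip (b j) (b i).
  rewrite /z (ip_suml _ Hip); apply: eq_bigr => i _.
  rewrite (ipC _ Hip) (ip_suml _ Hip) mulr_sumr; apply: eq_bigr => j _; by rewrite mulrA.
have zb : ip z z <= (L * s) ^+ 2 * G.
  rewrite zz; apply: le_trans (ler_norm _) _.
  apply: le_trans (ler_norm_sum _ _ _) _.
  rewrite /G mulr_sumr; apply: ler_sum => i _.
  apply: le_trans (ler_norm_sum _ _ _) _.
  rewrite mulr_sumr; apply: ler_sum => j _.
  rewrite !normrM expr2 ler_wpM2r //.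
  by apply: ler_pM => //; apply: ci.
rewrite /ipnorm; apply: le_trans (_ : Num.sqrt ((L * s) ^+ 2 * G) <= _).
  by rewrite ler_sqrt // mulr_ge0 ?sqr_ge0.
rewrite sqrtrM ?sqr_ge0 // sqrtr_sqr ger0_norm ?mulr_ge0 //.
by rewrite mulrAC.
Qed.
End Alin.
Section Pair.
Context {R : realType}.

Lemma pair_cvg (xi u : nat -> R) : (forall k, `|xi k| <= 1) -> in_l1 u ->
  cvgn (series (fun k => xi k * u k)).
Proof.
move=> hxi hu; apply: (@normed_cvg R R).
apply: (series_le_cvg _ _ _ hu) => k //=.
by rewrite normrM -[leRHS]mul1r ler_wpM2r.
Qed.

Lemma pair_le (xi u : nat -> R) : (forall k, `|xi k| <= 1) -> in_l1 u ->
  pair_seq xi u <= l1norm u.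
Proof.
move=> hxi hu; apply: ler_lim; [exact: pair_cvg | exact: hu |].
apply: nearW => N; apply: ler_sum => k _.
apply: le_trans (ler_norm _) _.
by rewrite normrM -[leRHS]mul1r ler_wpM2r.
Qed.

Lemma limseriesB (f g : nat -> R) : cvgn (series f) -> cvgn (series g) ->
  limn (series (fun k => f k - g k)) = limn (series f) - limn (series g).
Proof.
move=> hf hg.
have -> : series (fun k => f k - g k) = series f - series g.
  by apply/funext => N; rewrite /series /= sumrB.
exact: limB.
Qed.

Lemma cvg_seriesB (f g : nat -> R) : cvgn (series f) -> cvgn (series g) ->
  cvgn (series (fun k => f k - g k)).
Proof.
move=> hf hg.
have -> : series (fun k => f k - g k) = series f - series g.
  by apply/funext => N; rewrite /series /= sumrB.
exact: is_cvgB.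
Qed.
End Pair.
Section Main.
Context {R : realType} {V : lmodType R} (ip : V -> V -> R) (Hip : inner_product ip)
  (A : V -> nat -> R)
  (HA : forall (a : R) x y k, A (a *: x + y) k = a * A x k + A y k)
  (C : R) (HC : forall x k, `|A x k| <= C * ipnorm ip x)
  (n : nat) (b : 'I_n -> V) (Hli : lin_indep b) (Hker : kernel_trivial_on A b).

Lemma supnorm_ub (x : nat -> R) M k : (forall j, `|x j| <= M) -> `|x k| <= supnorm x.
Proof.
move=> hM; apply: ub_le_sup; last by exists k.
by exists M => _ [j _ <-].
Qed.

Lemma supnorm_le (x : nat -> R) s : (forall j, `|x j| <= s) -> supnorm x <= s.
Proof.
move=> hs; apply: ge_sup; first by exists `|x 0%N|, 0%N.
by move=> _ [j _ <-].
Qed.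

Lemma ipnorm_ge0 x : 0 <= ipnorm ip x.
Proof. exact: sqrtr_ge0. Qed.

Lemma ipnorm0 : ipnorm ip 0 = 0.
Proof. by rewrite /ipnorm (ip0l _ Hip) sqrtr0. Qed.

Lemma supA_pos z : in_span b z -> z <> 0 -> 0 < supnorm (A z).
Proof.
move=> hz nz.
have [k hk] : exists k, A z k != 0.
  apply/not_existsP => hall; apply: nz; apply: (Hker _ hz) => k.
  by apply/eqP; apply/negPn/negP => h; apply: (hall k).
apply: lt_le_trans (supnorm_ub (A z) (C * ipnorm ip z) k _); first by rewrite normr_gt0.
by move=> j; apply: HC.
Qed.

Let S := [set ipnorm ip z / supnorm (A z) | z in [set z | in_span b z /\ z <> 0]].

Lemma S_ub : has_ubound S.
Proof.
have [K [K0 HK]] := @span_bound _ _ A HA n b Hli Hker ip Hip.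
exists K => _ [z [[c hc] nz] <-].
have pos := supA_pos z (ex_intro _ c hc) nz.
rewrite ler_pdivrMr //.
rewrite hc; apply: HK => k; rewrite -hc.
by apply: (supnorm_ub (A z) (C * ipnorm ip z)) => j; apply: HC.
Qed.

Lemma kappa_ge0 : 0 <= kappa ip A b.
Proof.
rewrite /kappa -/S.
case: (pselect (S !=set0)) => [[e Se]|hS].
  apply: le_trans (ub_le_sup S_ub Se).
  case: Se => z [hz nz] <-; rewrite divr_ge0 ?ipnorm_ge0 //.
  exact: ltW (supA_pos z hz nz).
have -> : S = set0 by apply/eqP; apply/negPn/negP => h; apply: hS; apply/set0P.
by rewrite sup0.
Qed.

Lemma kappa_bound v s : in_span b v -> (forall k, `|A v k| <= s) ->
  ipnorm ip v <= kappa ip A b * s.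
Proof.
move=> hv hs.
have s0 : 0 <= s by apply: le_trans (hs 0%N).
have [->|nz] := eqVneq v 0.
  by rewrite ipnorm0 mulr_ge0 // kappa_ge0.
have nz' : v <> 0 by apply/eqP.
have pos := supA_pos v hv nz'.
have Se : S (ipnorm ip v / supnorm (A v)) by exists v.
have := ub_le_sup S_ub Se; rewrite /kappa -/S => h.
rewrite ler_pdivrMr // in h.
apply: le_trans h _; rewrite ler_wpM2l ?supnorm_le //.
by rewrite /kappa -/S; apply: kappa_ge0.
Qed.
End Main.

Theorem proposition3 (R : realType) (V : lmodType R) (ip : V -> V -> R)
  (A : V -> nat -> R) (n : nat) (b : 'I_n -> V)
  (f1 f2 : V) (u1 u2 : nat -> R) (v1 v2 : V) :
  inner_product ip -> ip_complete ip ->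
  bounded_linear_c0 ip A ->
  lin_indep b -> kernel_trivial_on A b ->
  is_min_sol ip A b f1 u1 -> is_min_sol ip A b f2 u2 ->
  in_span b v1 -> in_span b v2 ->
  subdiff_l1 u1 (A v1) -> subdiff_l1 u2 (A v2) ->
  pair_seq (fun k => A v1 k - A v2 k) (fun k => u1 k - u2 k)
    <= 2 * kappa ip A b * ipnorm ip (f1 - f2)
  /\ `|l1norm u1 - l1norm u2| <= 2 * kappa ip A b * ipnorm ip (f1 - f2).
Proof.
move=> Hip _ [_ [HA [C HC]]] Hli Hker [l1u1 [cu1 _]] [l1u2 [cu2 _]] hv1 hv2
  [b1 n1] [b2 n2].
have e11 := cu1 _ hv1; have e12 := cu2 _ hv1.
have e21 := cu1 _ hv2; have e22 := cu2 _ hv2.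
have kb := kappa_bound _ Hip _ HA _ HC _ _ Hli Hker.
have k0 := kappa_ge0 _ Hip _ HA _ HC _ _ Hli Hker.
have nf0 := ipnorm_ge0 ip (f1 - f2).
split.
  have -> : pair_seq (fun k => A v1 k - A v2 k) (fun k => u1 k - u2 k) =
      ip (v1 - v2) (f1 - f2).
    rewrite /pair_seq.
    have -> : (fun k => (A v1 k - A v2 k) * (u1 k - u2 k)) =
      (fun k => (fun k => A v1 k * u1 k - A v1 k * u2 k) k -
                (fun k => A v2 k * u1 k - A v2 k * u2 k) k).
      by apply/funext => k /=; ring.
    have c11 := pair_cvg _ _ b1 l1u1; have c12 := pair_cvg _ _ b1 l1u2.
    have c21 := pair_cvg _ _ b2 l1u1; have c22 := pair_cvg _ _ b2 l1u2.
    have c1 := cvg_seriesB _ _ c11 c12; have c2 := cvg_seriesB _ _ c21 c22.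
    rewrite (limseriesB _ _ c1 c2) (limseriesB _ _ c11 c12) (limseriesB _ _ c21 c22).
    rewrite -/(pair_seq (A v1) u1) -/(pair_seq (A v1) u2).
    rewrite -/(pair_seq (A v2) u1) -/(pair_seq (A v2) u2).
    rewrite e11 e12 e21 e22 (ipBl _ Hip) !(ipBr _ Hip); ring.
  apply: le_trans (CS _ Hip _ _) _.
  have hv : in_span b (v1 - v2).
    case: hv1 => c1 ->; case: hv2 => c2 ->.
    by exists (fun i => c1 i - c2 i); rewrite -sumrB; apply: eq_bigr => i _; rewrite scalerBl.
  have := kb (v1 - v2) 2 hv.
  have hb : forall k, `|A (v1 - v2) k| <= 2.
    move=> k; rewrite (AB _ HA); apply: le_trans (ler_normB _ _) _.
    by have := b1 k; have := b2 k; lra.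
  move=> /(_ hb) h.
  by rewrite [2 * _]mulrC ler_wpM2r.
have ipnB : forall x y, ipnorm ip (x - y) = ipnorm ip (y - x).
  move=> x y; rewrite /ipnorm !(ipBl _ Hip) !(ipBr _ Hip).
  by rewrite ((ipC _ Hip) y x); congr Num.sqrt; ring.
have le12 : l1norm u1 - l1norm u2 <= kappa ip A b * ipnorm ip (f1 - f2).
  have := pair_le _ _ b1 l1u2; rewrite e12 => h2.
  have : l1norm u1 = ip v1 f1 by rewrite -n1 e11.
  move=> h1.
  apply: (@le_trans _ _ (ip v1 (f1 - f2))); first by rewrite (ipBr _ Hip); lra.
  apply: le_trans (CS _ Hip _ _) _.
  by rewrite ler_wpM2r // -[kappa _ _ _]mulr1; apply: kb => // k; apply: b1.
have le21 : l1norm u2 - l1norm u1 <= kappa ip A b * ipnorm ip (f1 - f2).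
  have := pair_le _ _ b2 l1u1; rewrite e21 => h2.
  have : l1norm u2 = ip v2 f2 by rewrite -n2 e22.
  move=> h1.
  apply: (@le_trans _ _ (ip v2 (f2 - f1))); first by rewrite (ipBr _ Hip); lra.
  apply: le_trans (CS _ Hip _ _) _.
  rewrite -ipnB.
  by rewrite ler_wpM2r // -[kappa _ _ _]mulr1; apply: kb => // k; apply: b2.
have hk : kappa ip A b * ipnorm ip (f1 - f2) <= 2 * kappa ip A b * ipnorm ip (f1 - f2).
  by rewrite -mulrA ler_peMl // ?mulr_ge0 // ler1n.
rewrite ler_norml; apply/andP; split; last exact: le_trans le12 hk.
rewrite lerNl opprB; exact: le_trans le21 hk.
Qed.
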